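(* Let $\mathfrak l$ be a real finite-dimensional nilpotent Lie algebra with $\dim\mathfrak l'=2$ and $\mathfrak l'\subset\mathfrak z(\mathfrak l)$. Then there exists a 3-dimensional subspace $\bar{\mathfrak l}\subset\mathfrak l$ with $[\bar{\mathfrak l},\bar{\mathfrak l}]=\mathfrak l'$. Moreover, one can choose a basis $X_1,X_2,X_3$ of $\bar{\mathfrak l}$ and a basis $Y,Z$ of $\mathfrak l'$ such that $[X_1,X_2]=Y$, $[X_1,X_3]=Z$, $[X_2,X_3]=0$.
   Context: $\mathfrak l'=[\mathfrak l,\mathfrak l]$, $\mathfrak z(\mathfrak l)$ the centre. *)

(* Defs.v *)
From HB Require Import structures.
From mathcomp Require Import all_boot all_order all_algebra.
From mathcomp Require Import reals.
Set Implicit Arguments. Unset Strict Implicit. Unset Printing Implicit Defensive.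
Import Order.TTheory GRing.Theory Num.Theory.
Local Open Scope ring_scope.

Definition is_lie_bracket (R : realType) (V : vectType R) (br : V -> V -> V) : Prop :=
  [/\ (forall (a : R) (x y z : V), br (a *: x + y) z = a *: br x z + br y z),
      (forall (a : R) (x y z : V), br z (a *: x + y) = a *: br z x + br z y),
      (forall x : V, br x x = 0) &
      (forall x y z : V, br x (br y z) + br y (br z x) + br z (br x y) = 0)].

(* [U, W] : the subspace spanned by all brackets [u, w], u in U, w in W.
   By bilinearity it is spanned by the brackets of basis vectors. *)
Definition lie_br (R : realType) (V : vectType R) (br : V -> V -> V)
    (U W : {vspace V}) : {vspace V} :=
  <<[seq br u w | u <- vbasis U, w <- vbasis W]>>%VS.

Fixpoint lcs (R : realType) (V : vectType R) (br : V -> V -> V) (k : nat)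
    : {vspace V} :=
  if k is k'.+1 then lie_br br fullv (lcs br k') else fullv.

Definition lie_nilpotent (R : realType) (V : vectType R) (br : V -> V -> V) : Prop :=
  exists n : nat, lcs br n = 0%VS.

Definition derived (R : realType) (V : vectType R) (br : V -> V -> V) : {vspace V} :=
  lie_br br fullv fullv.

Definition in_center (R : realType) (V : vectType R) (br : V -> V -> V) (z : V) : Prop :=
  forall x : V, br x z = 0.

(* Main.v *)
Require Import Defs.
From HB Require Import structures.
From mathcomp Require Import all_boot all_order all_algebra.
From mathcomp Require Import reals.
From Stdlib Require Import Classical.
Import Order.TTheory GRing.Theory Num.Theory.
Local Open Scope ring_scope.

Lemma free2P (K : fieldType) (V : vectType K) (u v : V) :
  free [:: u; v] <-> (u != 0 /\ forall k : K, v != k *: u).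
Proof.
rewrite free_cons span_seq1 seq1_free.
split.
- case/andP=> hu hv; split.
    by apply/negP=> /eqP u0; move: hu; rewrite u0 mem0v.
  move=> k; apply/negP=> /eqP vk; move: hu; rewrite vk.
  have k0 : k != 0 by apply/negP=> /eqP k0; move: hv; rewrite vk k0 scale0r eqxx.
  case/negP; apply/vlineP; exists k^-1; by rewrite scalerA mulVf // scale1r.
- case=> hu hv; apply/andP; split.
    apply/negP=> /vlineP [m um].
    have m0 : m != 0 by apply/negP=> /eqP m0; move: hu; rewrite um m0 scale0r eqxx.
    by move: (hv m^-1); rewrite um scalerA mulVf // scale1r eqxx.
  by apply/negP=> /eqP v0; move: (hv 0); rewrite v0 scale0r eqxx.
Qed.

Lemma line_cap (K : fieldType) (V : vectType K) (Y Z w : V) :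
  free [:: Y; Z] -> w \in <[Y]>%VS -> w \in <[Z]>%VS -> w = 0.
Proof.
move=> /free2P [hY hZ] /vlineP [k ->] /vlineP [m e].
case: (eqVneq m 0) => m0.
  by move: e; rewrite m0 scale0r.
have : Z = (m^-1 * k) *: Y by rewrite -scalerA e scalerA mulVf // scale1r.
by move/eqP; rewrite (negbTE (hZ _)).
Qed.

Arguments line_cap {K V Y Z w}.

Lemma br0l {R : realType} {V : vectType R} {br : V -> V -> V} :
  is_lie_bracket br -> forall z, br 0 z = 0.
Proof.
case=> l _ _ _ z; have := l 1 0 0 z; rewrite !scale1r addr0 => /eqP.
by rewrite eq_sym -subr_eq0 addrK => /eqP.
Qed.

Lemma br0r {R : realType} {V : vectType R} {br : V -> V -> V} :
  is_lie_bracket br -> forall z, br z 0 = 0.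
Proof.
case=> _ l _ _ z; have := l 1 0 0 z; rewrite !scale1r addr0 => /eqP.
by rewrite eq_sym -subr_eq0 addrK => /eqP.
Qed.

Lemma brDl {R : realType} {V : vectType R} {br : V -> V -> V} :
  is_lie_bracket br -> forall x y z, br (x + y) z = br x z + br y z.
Proof. by case=> l _ _ _ x y z; have := l 1 x y z; rewrite !scale1r. Qed.

Lemma brDr {R : realType} {V : vectType R} {br : V -> V -> V} :
  is_lie_bracket br -> forall x y z, br z (x + y) = br z x + br z y.
Proof. by case=> _ l _ _ x y z; have := l 1 x y z; rewrite !scale1r. Qed.

Lemma brZl {R : realType} {V : vectType R} {br : V -> V -> V} :
  is_lie_bracket br -> forall a x z, br (a *: x) z = a *: br x z.
Proof.
move=> h; have h0 := br0l h; case: h => l _ _ _ a x z.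
by have := l a x 0 z; rewrite !addr0 h0 addr0.
Qed.

Lemma brZr {R : realType} {V : vectType R} {br : V -> V -> V} :
  is_lie_bracket br -> forall a x z, br z (a *: x) = a *: br z x.
Proof.
move=> h; have h0 := br0r h; case: h => _ l _ _ a x z.
by have := l a x 0 z; rewrite !addr0 h0 addr0.
Qed.

Lemma brN {R : realType} {V : vectType R} {br : V -> V -> V} :
  is_lie_bracket br -> forall x y, br x y = - br y x.
Proof.
move=> h x y; have e : br (x + y) (x + y) = 0 by case: h.
rewrite (brDl h) !(brDr h) in e.
have al : forall w, br w w = 0 by case: h.
move: e; rewrite !al add0r addr0 => /eqP.
by rewrite addr_eq0 => /eqP.
Qed.

Lemma br_mem {R : realType} {V : vectType R} {br : V -> V -> V} :
  is_lie_bracket br -> forall (U W : {vspace V}) u w,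
  u \in U -> w \in W -> br u w \in lie_br br U W.
Proof.
move=> h U W u w hu hw.
rewrite (coord_vbasis hu) (coord_vbasis hw).
rewrite (big_morph (fun x => br x _) (fun x y => brDl h x y _) (br0l h _)).
apply: rpred_sum => i _; rewrite brZl //; apply: rpredZ.
rewrite (big_morph (br _) (fun x y => brDr h x y _) (br0r h _)).
apply: rpred_sum => j _; rewrite brZr //; apply: rpredZ.
apply: memv_span; apply: allpairs_f; apply: mem_nth; by rewrite size_tuple.
Qed.

Lemma lie_br_sub {R : realType} {V : vectType R} {br : V -> V -> V} :
  is_lie_bracket br -> forall (U W : {vspace V}),
  (lie_br br U W <= derived br)%VS.
Proof.
move=> h U W; apply/span_subvP => x /allpairsP [[u w] [_ _ ->]] /=.
by apply: br_mem; rewrite ?memvf.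
Qed.

Lemma dep_line (K : fieldType) (V : vectType K) (u v : V) :
  ~ free [:: u; v] -> u != 0 -> v \in <[u]>%VS.
Proof.
move=> nf u0; case: (boolP (v \in <[u]>%VS)) => // nv; exfalso; apply: nf; apply/free2P; split=> // k.
by apply/negP=> /eqP e; move: nv; rewrite e memvZ // memv_line.
Qed.

Arguments dep_line {K V u v}.

Lemma exists_free_pair {R : realType} {V : vectType R} {br : V -> V -> V} :
  is_lie_bracket br -> \dim (derived br) = 2%N ->
  exists a b c d, free [:: br a b; br c d].
Proof.
move=> h hdim.
set L := [seq br u w | u <- vbasis fullv, w <- vbasis fullv].
have hD : derived br = <<L>>%VS by [].
case: (boolP (all (fun v => v == 0) L)) => [/allP a0 | /allPn [Y YL Y0]].
  have : (<<L>> <= 0)%VS by apply/span_subvP => v /a0 /eqP ->; rewrite mem0v.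
  by rewrite subv0 -hD => /eqP e; move: hdim; rewrite e dimv0.
case: (boolP (all (fun v => v \in <[Y]>%VS) L)) => [/allP aY | /allPn [Z ZL ZY]].
  have : (<<L>> <= <[Y]>)%VS by apply/span_subvP.
  by move/dimvS; rewrite -hD hdim dim_vline Y0.
have fr : free [:: Y; Z].
  apply/free2P; split=> // k; apply/negP => /eqP e; move: ZY; rewrite e.
  by rewrite memvZ // memv_line.
case/allpairsP: YL => [[a b] [_ _ /= eY]].
case/allpairsP: ZL => [[c d] [_ _ /= eZ]].
by exists a, b, c, d; rewrite -eY -eZ.
Qed.

Lemma exists_good {R : realType} {V : vectType R} {br : V -> V -> V} :
  is_lie_bracket br -> \dim (derived br) = 2%N ->
  exists x p q, free [:: br x p; br x q].
Proof.
move=> h hdim; case: (exists_free_pair h hdim) => a [b [c [d fr]]].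
apply: NNPP => nH.
have H : forall x p q, ~ free [:: br x p; br x q].
  by move=> x p q f; apply: nH; exists x, p, q.
have /free2P [hY _] := fr.
have hZ : br c d != 0 by apply: (free_not0 fr); rewrite !inE eqxx orbT.
have ad0 : br a d = 0.
  apply: (line_cap fr); first exact: dep_line (H a b d) hY.
  have := dep_line (H d c a); rewrite (brN h d c) oppr_eq0 => /(_ hZ) /vlineP [k e].
  by rewrite (brN h a d) e scalerN opprK memvZ // memv_line.
have cb0 : br c b = 0.
  apply: (line_cap fr); last exact: dep_line (H c d b) hZ.
  have := dep_line (H b a c); rewrite (brN h b a) oppr_eq0 => /(_ hY) /vlineP [k e].
  by rewrite (brN h c b) e scalerN opprK memvZ // memv_line.
apply: (H (a + c) b d).
by rewrite !(brDl h) ad0 cb0 addr0 add0r.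
Qed.

Theorem lemma1 (R : realType) (V : vectType R) (br : V -> V -> V)
  (hlie : is_lie_bracket br) (hnil : lie_nilpotent br)
  (hdim : \dim (derived br) = 2%N)
  (hcent : forall y : V, y \in derived br -> in_center br y) :
  exists (X1 X2 X3 Y Z : V),
    [/\ free [:: X1; X2; X3],
        free [:: Y; Z],
        derived br = <<[:: Y; Z]>>%VS,
        lie_br br <<[:: X1; X2; X3]>>%VS <<[:: X1; X2; X3]>>%VS = derived br &
        [/\ br X1 X2 = Y, br X1 X3 = Z & br X2 X3 = 0]].
Proof.
have h := hlie.
have al : forall w, br w w = 0 by case: hlie.
case: (exists_good h hdim) => x [p [q fr]].
set Y := br x p; set Z := br x q.
have /free2P [hY _] := fr.
have hZ : Z != 0 by apply: (free_not0 fr); rewrite !inE eqxx orbT.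
have hD : derived br = <<[:: Y; Z]>>%VS.
  apply/eqP; rewrite eq_sym eqEdim; apply/andP; split.
    apply/span_subvP => v; rewrite !inE => /orP[/eqP->|/eqP->];
      by apply: br_mem; rewrite ?memvf.
  by rewrite hdim (eqnP fr).
have : br p q \in <<[:: Y; Z]>>%VS by rewrite -hD; apply: br_mem; rewrite ?memvf.
rewrite span_cons span_seq1 => /memv_addP [y /vlineP [al' ->] [z /vlineP [be ->] epq]].
set X2 := p + (- be) *: x; set X3 := q + al' *: x.
have e12 : br x X2 = Y by rewrite /X2 (brDr h) (brZr h) al scaler0 addr0.
have e13 : br x X3 = Z by rewrite /X3 (brDr h) (brZr h) al scaler0 addr0.
have e23 : br X2 X3 = 0.
  rewrite /X2 /X3 !(brDl h) !(brDr h) !(brZl h) !(brZr h) al epq (brN h p x).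
  rewrite -/Y -/Z !scaler0 ?addr0 ?scaleNr ?scalerN.
  by rewrite (addrC (al' *: Y)) addrK subrr.
exists x, X2, X3, Y, Z; split => //.
- rewrite free_cons free_cons seq1_free span_cons !span_seq1.
  apply/and3P; split.
  + apply/negP => /memv_addP [u /vlineP [k2 ->] [v /vlineP [k3 ->] ex]].
    have e0 : k2 *: Y + k3 *: Z = 0.
      by rewrite -e12 -e13 -(brZr h) -(brZr h) -(brDr h) -ex al.
    have k2Y : k2 *: Y = 0.
      apply: (line_cap fr); first by rewrite memvZ // memv_line.
      by move/eqP: e0; rewrite addr_eq0 => /eqP ->; rewrite rpredN memvZ // memv_line.
    have k3Z : k3 *: Z = 0 by move: e0; rewrite k2Y add0r.
    move/eqP: k2Y; rewrite scaler_eq0 (negbTE hY) orbF => /eqP k20.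
    move/eqP: k3Z; rewrite scaler_eq0 (negbTE hZ) orbF => /eqP k30.
    move: ex; rewrite k20 k30 !scale0r addr0 => x0.
    by move: hY; rewrite /Y x0 (br0l h) eqxx.
  + apply/negP => /vlineP [k e].
    have : Y \in <[Z]>%VS by rewrite -e12 e (brZr h) e13 memvZ // memv_line.
    move/(line_cap fr (memv_line Y)) => Y0; by move: hY; rewrite -/Y Y0 eqxx.
  + by apply/negP => /eqP X30; move: hZ; rewrite -e13 X30 (br0r h) eqxx.
- apply/eqP; rewrite eqEsubv (lie_br_sub h) /= hD.
  apply/span_subvP => v; rewrite !inE => /orP[/eqP->|/eqP->];
    [rewrite -e12 | rewrite -e13]; apply: (br_mem h); apply: memv_span;
    by rewrite !inE eqxx ?orbT.
Qed.
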